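(* Let $\mathbf{u}=(u_1,u_2)\in\mathbb{R}[x_1,x_2]_d^2$, let $c=\gcd(u_1,u_2)$ and $u_i'=u_i/c$, and suppose that $c$ and $u_1'^2+u_2'^2$ are coprime (equivalently, in the decomposition $(u_1,u_2)=(u_1'gh,u_2'gh)$ with $\gcd(u_1,u_2)=gh$, $\gcd(u_1'^2+u_2'^2,g)=1$ and every root of $h$ a root of $u_1'^2+u_2'^2$, one has $h=1$). Then for every $p\in\Sigma[x_1,x_2]_{2d}$, $$p\in\operatorname{im}(\mathcal{A}_{\mathbf{u}})+\operatorname{cone}\big(\sigma(\ker(\mathcal{A}_{\mathbf{u}}))\big).$$
   Context: $\mathbb{R}[x_1,x_2]_n$ denotes the space of real binary forms (homogeneous polynomials in $x_1,x_2$) of degree $n$, and $\Sigma[x_1,x_2]_{2d}$ the cone of sums of squares of binary forms of degree $d$. $\gcd$ of binary forms is the common divisor of highest degree (unique up to scalar); coprime means $\gcd$ is constant. $\mathcal{A}_{\mathbf{u}}:\mathbb{R}[x_1,x_2]_d^2\to\mathbb{R}[x_1,x_2]_{2d}$ is $(v_1,v_2)\mapsto u_1v_1+u_2v_2$, $\sigma(v_1,v_2)=v_1^2+v_2^2$, and $\operatorname{cone}(S)$ is the set of nonnegative combinations of elements of $S$. *)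

(* Defs.v *)
From HB Require Import structures.
From mathcomp Require Import all_boot all_order all_algebra.
From mathcomp Require Import reals.
From mathcomp.multinomials Require Import mpoly.
Set Implicit Arguments. Unset Strict Implicit. Unset Printing Implicit Defensive.
Import Order.TTheory GRing.Theory Num.Theory.
Local Open Scope ring_scope.

Definition mdivides (R : realType) (a b : {mpoly R[2]}) : Prop :=
  exists r : {mpoly R[2]}, b = a * r.

Definition is_mgcd (R : realType) (c a b : {mpoly R[2]}) : Prop :=
  [/\ mdivides c a, mdivides c b &
      forall q : {mpoly R[2]}, mdivides q a -> mdivides q b -> mdivides q c].

Definition mcoprime (R : realType) (a b : {mpoly R[2]}) : Prop :=
  forall q : {mpoly R[2]}, mdivides q a -> mdivides q b ->
    exists k : R, q = k%:MP.

Definition sos_form (R : realType) (d : nat) (p : {mpoly R[2]}) : Prop :=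
  exists s : seq {mpoly R[2]},
    (forall q, q \in s -> q \is d.-homog) /\ p = \sum_(q <- s) q ^+ 2.

Definition A_u (R : realType) (u1 u2 v1 v2 : {mpoly R[2]}) : {mpoly R[2]} :=
  u1 * v1 + u2 * v2.

Definition in_im_A (R : realType) (d : nat) (u1 u2 p : {mpoly R[2]}) : Prop :=
  exists v1 v2 : {mpoly R[2]},
    [/\ v1 \is d.-homog, v2 \is d.-homog & p = A_u u1 u2 v1 v2].

Definition in_sigma_ker (R : realType) (d : nat) (u1 u2 p : {mpoly R[2]}) : Prop :=
  exists v1 v2 : {mpoly R[2]},
    [/\ v1 \is d.-homog, v2 \is d.-homog, A_u u1 u2 v1 v2 = 0 &
        p = v1 ^+ 2 + v2 ^+ 2].

Definition in_cone (R : realType) (S : {mpoly R[2]} -> Prop) (p : {mpoly R[2]}) : Prop :=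
  exists s : seq (R * {mpoly R[2]}),
    (forall x, x \in s -> 0 <= x.1 /\ S x.2) /\
    p = \sum_(x <- s) x.1 *: x.2.

(* Main.v *)
Require Import Defs.
From HB Require Import structures.
From mathcomp Require Import all_boot all_order all_algebra.
From mathcomp Require Import reals.
From mathcomp.multinomials Require Import mpoly.
From mathcomp Require Import zify ring lra.
Set Implicit Arguments. Unset Strict Implicit. Unset Printing Implicit Defensive.
Import Order.TTheory GRing.Theory Num.Theory.
Local Open Scope ring_scope.

Section S.
Variable R : realType.
Definition i0 : 'I_2 := ord0.
Definition i1 : 'I_2 := ord_max.
Definition hphi (i : 'I_2) : {poly R} := if i == i0 then 'X else 1.
Definition phi (f : {mpoly R[2]}) : {poly R} := mmap (@polyC R) hphi f.
HB.instance Definition _ := GRing.RMorphism.copy phi (mmap (@polyC R) hphi).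

Lemma phiXm m : phi 'X_[m] = 'X^(m i0).
Proof.
rewrite /phi mmapX /mmap1 big_ord_recl big_ord_recl big_ord0 /hphi /=.
by rewrite expr1n !mulr1.
Qed.

Lemma phiXi i : phi 'X_i = hphi i.
Proof. by rewrite /phi mmapX mmap1U. Qed.

Lemma phiZ a f : phi (a *: f) = a *: phi f.
Proof. by rewrite /phi mmapZ mul_polyC. Qed.

Lemma phiC a : phi a%:MP = a%:P.
Proof. by rewrite /phi mmapC. Qed.

Definition homM (n i : nat) : {mpoly R[2]} := 'X_i0 ^+ i * 'X_i1 ^+ (n - i).

Definition hom (n : nat) (P : {poly R}) : {mpoly R[2]} :=
  \sum_(i < n.+1) P`_i *: homM n i.

Lemma X1homog (i : 'I_2) : ('X_i : {mpoly R[2]}) \is 1.-homog.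
Proof. by rewrite dhomogX; apply/eqP; apply: mdeg1. Qed.

Lemma homM_homog (n i : nat) : (i <= n)%N -> homM n i \is n.-homog.
Proof.
move=> hi; rewrite /homM.
have := dhomogM (dhomogMn i (X1homog i0)) (dhomogMn (n - i) (X1homog i1)).
by rewrite !mul1n subnKC.
Qed.

Lemma hom_homog n P : hom n P \is n.-homog.
Proof.
apply: rpred_sum => i _; apply: dhomogZ; apply: homM_homog.
by rewrite -ltnS.
Qed.

Lemma phi_homM n i : phi (homM n i) = 'X^i.
Proof.
by rewrite /homM rmorphM !rmorphXn /= !phiXi /hphi /= expr1n mulr1.
Qed.

Lemma phi_hom n P : phi (hom n P) = \poly_(i < n.+1) P`_i.
Proof.
rewrite /hom raddf_sum poly_def; apply: eq_bigr => i _ /=.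
by rewrite phiZ phi_homM.
Qed.

Lemma phi_hom_size n (P : {poly R}) : (size P <= n.+1)%N -> phi (hom n P) = P.
Proof.
move=> hP; rewrite phi_hom; apply/polyP => j; rewrite coef_poly.
case: ltnP => // h; by rewrite nth_default // (leq_trans hP h).
Qed.

Lemma homZ n a (P : {poly R}) : hom n (a *: P) = a *: hom n P.
Proof. by rewrite /hom scaler_sumr; apply: eq_bigr => i _; rewrite coefZ scalerA. Qed.

Lemma homD n (P Q : {poly R}) : hom n (P + Q) = hom n P + hom n Q.
Proof. by rewrite /hom -big_split; apply: eq_bigr => i _; rewrite coefD scalerDl. Qed.

Lemma hom0 n : hom n 0 = 0.
Proof. by rewrite /hom big1 // => i _; rewrite coef0 scale0r. Qed.

Lemma hom_Xn n j : (j <= n)%N -> hom n 'X^j = homM n j.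
Proof.
move=> hj; rewrite /hom (bigD1 (Ordinal (hj : (j < n.+1)%N))) //= coefXn eqxx scale1r.
rewrite big1 ?addr0 // => i /eqP hij; rewrite coefXn.
case: eqP => [e|_]; last by rewrite scale0r.
by case: hij; apply: val_inj.
Qed.

Lemma hom_phi n (f : {mpoly R[2]}) : f \is n.-homog -> hom n (phi f) = f.
Proof.
move=> /dhomogP hf.
have -> : phi f = \sum_(m <- msupp f) phi (f@_m *: 'X_[m]).
  by rewrite -raddf_sum -mpolyE.
rewrite (big_morph (hom n) (homD n) (hom0 n)) [RHS]mpolyE.
rewrite !big_seq; apply: eq_bigr => m hm.
rewrite phiZ phiXm homZ; congr (_ *: _).
have hd : (m i0 + m i1 = n)%N.
  have := hf m hm; rewrite /= mdegE big_ord_recl big_ord_recl big_ord0 addn0.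
  by have -> : (lift ord0 ord0 : 'I_2) = i1 by apply: val_inj.
rewrite hom_Xn; last by rewrite -hd leq_addr.
rewrite /homM [RHS]mpolyXE_id big_ord_recl big_ord_recl big_ord0 mulr1.
have -> : (lift ord0 ord0 : 'I_2) = i1 by apply: val_inj.
rewrite -hd addKn. done.
Qed.

Lemma hom_inj n (f g : {mpoly R[2]}) : f \is n.-homog -> g \is n.-homog -> phi f = phi g -> f = g.
Proof. by move=> hf hg e; rewrite -(hom_phi hf) -(hom_phi hg) e. Qed.

Lemma size_phi n (f : {mpoly R[2]}) : f \is n.-homog -> (size (phi f) <= n.+1)%N.
Proof. by move=> hf; rewrite -(hom_phi hf) phi_hom size_poly. Qed.

Lemma hom_mul a b (P Q : {poly R}) : (size P <= a.+1)%N -> (size Q <= b.+1)%N ->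
  hom (a + b) (P * Q) = hom a P * hom b Q.
Proof.
move=> hP hQ; apply: (@hom_inj (a + b)); first exact: hom_homog.
  by apply: dhomogM; apply: hom_homog.
rewrite rmorphM /= !phi_hom_size //.
apply: (leq_trans (size_polyMleq _ _)); lia.
Qed.


End S.

Section S2.
Variable R : realType.
Definition hth (i : 'I_2) : {poly {mpoly R[2]}} := ('X_i)%:P * 'X.
Definition th (f : {mpoly R[2]}) : {poly {mpoly R[2]}} :=
  mmap (polyC \o (@mpolyC 2 R)) hth f.
HB.instance Definition _ := GRing.RMorphism.copy th (mmap (polyC \o (@mpolyC 2 R)) hth).


Lemma thX m : th 'X_[m] = ('X_[m])%:P * 'X^(mdeg m).
Proof.
rewrite /th mmapX /mmap1 /hth.
under eq_bigr do rewrite exprMn -rmorphXn.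
rewrite big_split /= -rmorph_prod prodrXr -mdegE mpolyXE_id.
done.
Qed.

Lemma th_coef f j : (th f)`_j = pihomog mdeg j f.
Proof.
have -> : th f = \sum_(m <- msupp f) th (f@_m *: 'X_[m]).
  by rewrite -raddf_sum -mpolyE.
rewrite coef_sum pihomogE [RHS]big_mkcond /=; apply: eq_bigr => m _.
rewrite /th mmapZ -/(th _) thX /= mulrA -rmorphM /= coefCM coefXn.
rewrite -mul_mpolyC eq_sym; case: (mdeg m == j).
  exact: mulr1.
exact: mulr0.
Qed.

Lemma th_homog n f : f \is n.-homog -> th f = f%:P * 'X^n.
Proof.
move=> hf; apply/polyP => j; rewrite th_coef coefCM coefXn.
case: eqP => [->|/eqP ne]; first by rewrite mulr1 pihomog_dE.
by rewrite mulr0 (pihomog_ne0 _ hf) // eq_sym.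
Qed.

Lemma th_inv i f y : th f = y%:P * 'X^i -> f \is i.-homog.
Proof.
move=> e; rewrite (pihomog_partitionE (leqnn (mmeasure mdeg f))).
apply: rpred_sum => j _.
have [->|ne] := eqVneq (j : nat) i; first exact: pihomogP.
by rewrite -th_coef e coefCM coefXn (negbTE ne) mulr0 dhomog0.
Qed.

Lemma mono_fac (D : idomainType) d : forall (a b : {poly D}) (y : D), y != 0 ->
  a * b = y%:P * 'X^d -> exists z i, a = z%:P * 'X^i.
Proof.
elim: d => [|d IH] a b y y0 e.
  rewrite expr0 mulr1 in e.
  have : size (a * b) == 1%N by rewrite e size_polyC y0.
  rewrite size_mul_eq1 => /andP [/eqP ha _].
  by exists a`_0, 0%N; rewrite expr0 mulr1; apply: size1_polyC; rewrite ha.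
have : (a * b).[0] = 0 by rewrite e hornerM hornerC hornerXn expr0n mulr0.
rewrite hornerM => /eqP; rewrite mulf_eq0 => /orP [] /eqP h0.
  have /factor_theorem [a' ea] : root a 0 by rewrite /root h0.
  rewrite subr0 in ea.
  have e' : a' * b = y%:P * 'X^d.
    apply: (@mulIf _ 'X); first by rewrite polyX_eq0.
    rewrite -mulrA [b * _]mulrC mulrA -ea e exprSr mulrA.
    done.
  have [z [i ez]] := IH _ _ _ y0 e'.
  by exists z, i.+1; rewrite ea ez exprSr mulrA.
have /factor_theorem [b' eb] : root b 0 by rewrite /root h0.
rewrite subr0 in eb.
have e' : a * b' = y%:P * 'X^d.
  apply: (@mulIf _ 'X); first by rewrite polyX_eq0.
    rewrite -mulrA -eb e exprSr mulrA.
  done.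
exact: IH _ _ _ y0 e'.
Qed.

Lemma fac_homog (p q : {mpoly R[2]}) d : p * q != 0 -> p * q \is d.-homog ->
  exists k, p \is k.-homog.
Proof.
move=> nz hd; have := th_homog hd; rewrite rmorphM /= => e.
have [z [i ez]] := mono_fac nz e.
by exists i; apply: (th_inv ez).
Qed.
End S2.

Section S3.
Variable R : realType.

Lemma size_le_mul (P Q : {poly R}) a b : (size P <= a.+1)%N -> (size Q <= b.+1)%N ->
  (size (P * Q)%R <= (a + b).+1)%N.
Proof.
move=> hP hQ; apply: (leq_trans (size_polyMleq _ _)).
move: hP hQ; set x := size P; set y := size Q; lia.
Qed.

Lemma lemL (F G H : {poly R}) (a b m : nat) :
  (size F <= a.+1)%N -> size G = b.+1 -> coprimep F G -> (size H <= m.+1)%N ->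
  (a + b <= m.+1)%N ->
  exists X Y : {poly R}, [/\ (size X <= (m - a).+1)%N, (size Y <= (m - b).+1)%N & H = F * X + G * Y].
Proof.
move=> hF hG cop hH hab.
have [[x0 y0] /= hb] := Bezout_eq1_coprimepP _ _ cop.
have G0 : G != 0 by rewrite -size_poly_eq0 hG.
set Q := (H * x0) %/ G; set X := (H * x0) %% G.
have eX : X = H * x0 - Q * G by apply/eqP; rewrite eq_sym subr_eq addrC /X /Q -divp_eq.
set Y := H * y0 + F * Q.
have e : H = F * X + G * Y.
  rewrite eX /Y; transitivity (H * (x0 * F + y0 * G)); first by rewrite hb mulr1.
  ring.
have sX : (size X < b.+1)%N by rewrite -hG ltn_modp.
exists X, Y; split => //.
  move: sX hab; set x := size X; lia.
have [->|Y0] := eqVneq Y 0; first by rewrite size_poly0.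
have eGY : G * Y = H - F * X by rewrite e addrC addKr.
have h1 : (size (F * X)%R <= m.+1)%N.
  have := size_polyMleq F X; move: hF sX hab.
  set sf := size F; set sx := size X; set sp := size (F * X)%R; lia.
have h2 : (size (H - F * X)%R <= m.+1)%N.
  by apply: (leq_trans (size_polyD _ _)); rewrite size_polyN geq_max hH.
have := size_mul G0 Y0; rewrite eGY hG.
move: h2; set z := size (H - F * X)%R; set y := size Y; lia.
Qed.


Lemma sizeM_le (P Q : {poly R}) a b n : (size P <= a.+1)%N -> (size Q <= b.+1)%N ->
  (a + b <= n)%N -> (size (P * Q)%R <= n.+1)%N.
Proof.
move=> hP hQ h; apply: (leq_trans (size_le_mul hP hQ)); by rewrite ltnS.
Qed.

Lemma sizeD_le (P Q : {poly R}) n : (size P <= n)%N -> (size Q <= n)%N ->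
  (size (P + Q)%R <= n)%N.
Proof. by move=> hP hQ; apply: (leq_trans (size_polyD _ _)); rewrite geq_max hP. Qed.

Lemma coef_sqr_top (U : {poly R}) e : (size U <= e.+1)%N -> (U * U)`_(e + e) = U`_e * U`_e.
Proof.
move=> hU; rewrite coefM (bigD1 (Ordinal (leq_addr e e : (e < (e + e).+1)%N))) //=.
rewrite addnK big1 ?addr0 // => j /eqP hj.
have [lt|ge] := ltnP e j.
  by rewrite (nth_default 0 (leq_trans hU lt)) mul0r.
have lt : (e < j)%N \/ (j < e)%N.
  right; rewrite ltn_neqAle ge andbT; apply/eqP => ej; apply: hj; apply: val_inj => /=.
  by rewrite ej.
case: lt => [lt|lt]; first by rewrite (nth_default 0 (leq_trans hU lt)) mul0r.
have h2 : (e.+1 <= e + e - j)%N by move: lt (ltn_ord j); lia.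
by rewrite (nth_default 0 (leq_trans hU h2)) mulr0.
Qed.

Lemma sizeS (U1 U2 : {poly R}) e : (size U1 <= e.+1)%N -> (size U2 <= e.+1)%N ->
  (size U1 = e.+1 \/ size U2 = e.+1) -> size (U1 ^+ 2 + U2 ^+ 2) = (e + e).+1.
Proof.
move=> h1 h2 hor.
have cnz : (U1 ^+ 2 + U2 ^+ 2)`_(e + e) != 0.
  rewrite coefD !expr2 !coef_sqr_top // -!expr2 paddr_eq0 ?sqr_ge0 //.
  rewrite !sqrf_eq0 negb_and.
  case: hor => h; [apply/orP; left|apply/orP; right].
    have : lead_coef U1 != 0 by rewrite lead_coef_eq0 -size_poly_eq0 h.
    by rewrite /lead_coef h.
  have : lead_coef U2 != 0 by rewrite lead_coef_eq0 -size_poly_eq0 h.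
  by rewrite /lead_coef h.
have up : (size (U1 ^+ 2 + U2 ^+ 2)%R <= (e + e).+1)%N.
  by apply: sizeD_le; rewrite expr2; apply: sizeM_le; eauto.
have lo : ~~ (size (U1 ^+ 2 + U2 ^+ 2)%R <= e + e)%N.
  by apply/negP => hs; move: cnz; rewrite nth_default // eqxx.
by move: up lo; set z := size _; lia.
Qed.

Lemma core (C U1 U2 S Q : {poly R}) (k e : nat) :
  S = U1 ^+ 2 + U2 ^+ 2 ->
  C != 0 -> (size C <= k.+1)%N -> (size U1 <= e.+1)%N -> (size U2 <= e.+1)%N ->
  (size Q <= (e + k).+1)%N ->
  coprimep U1 U2 -> (size U1 = e.+1 \/ size U2 = e.+1) ->
  coprimep C S ->
  exists A B T1 T2 : {poly R},
   [/\ (size A <= (e + k).+1)%N, (size B <= (e + k).+1)%N, (size T1 <= k.+1)%N,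
       (size T2 <= k.+1)%N &
    Q ^+ 2 = C * U1 * A + C * U2 * B + S * T1 ^+ 2 + S * T2 ^+ 2].
Proof.
move=> eS C0 hC h1 h2 hQ cop12 hor copCS.
have sS : size S = (e + e).+1 by rewrite eS; apply: sizeS.
have hQU (U : {poly R}) : (size U <= e.+1)%N -> (size (Q * U)%R <= ((e + e) + k).+1)%N.
  by move=> hU; apply: (sizeM_le hQ hU); lia.
have hkm : (k + (e + e) <= (e + e + k).+1)%N by lia.
have [X1 [T1 [sX1 sT1 e1]]] := lemL hC sS copCS (hQU _ h1) hkm.
have [X2 [T2 [sX2 sT2 e2]]] := lemL hC sS copCS (hQU _ h2) hkm.
have eT1 : S * T1 = Q * U1 - C * X1 by rewrite e1 addrC addKr.
have eT2 : S * T2 = Q * U2 - C * X2 by rewrite e2 addrC addKr.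
pose V := U1 * X1 + U2 * X2.
pose W := C * (X1 ^+ 2 + X2 ^+ 2) - (Q * V + Q * V).
pose Hh := S * (T1 ^+ 2 + T2 ^+ 2) - Q ^+ 2.
have eSH : S * Hh = C * W.
  transitivity ((S * T1) ^+ 2 + (S * T2) ^+ 2 - S * Q ^+ 2).
    by rewrite /Hh; ring.
  by rewrite eT1 eT2 eS /W /V; ring.
have dv : C %| Hh by rewrite -(Gauss_dvdpr _ copCS) eSH dvdp_mulIl.
pose Z := Hh %/ C.
have eZ : Hh = Z * C by rewrite /Z divpK.
have sX1' : (size X1 <= (e + e).+1)%N by move: sX1; rewrite addnK.
have sX2' : (size X2 <= (e + e).+1)%N by move: sX2; rewrite addnK.
have sW : (size W <= (e + e + e + e + k).+1)%N.
  rewrite /W; apply: sizeD_le; last rewrite size_polyN.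
    apply: (@sizeM_le _ _ k (e + e + e + e) _ hC); last by lia.
    by apply: sizeD_le; rewrite expr2; apply: sizeM_le; eauto; rewrite !addnA.
  have sV : (size V <= (e + e + e).+1)%N.
    by rewrite /V; apply: sizeD_le; [apply: (sizeM_le h1 sX1') | apply: (sizeM_le h2 sX2')]; lia.
  by apply: sizeD_le; apply: (sizeM_le hQ sV); lia.
have sZ : (size Z <= (e + e + k).+1)%N.
  have eSZ : S * Z = W.
    apply: (mulIf C0); rewrite -mulrA -eZ eSH mulrC. done.
  have [->|Z0] := eqVneq Z 0; first by rewrite size_poly0.
  have S0 : S != 0 by rewrite -size_poly_eq0 sS.
  have := size_mul S0 Z0; rewrite eSZ sS.
  move: sW; set w := size W; set z := size Z; lia.
have [A [B [sA sB eAB]]] : exists A B : {poly R},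
    [/\ (size A <= (e + k).+1)%N, (size B <= (e + k).+1)%N & - Z = U1 * A + U2 * B].
  have sNZ : (size (- Z) <= (e + e + k).+1)%N by rewrite size_polyN.
  have hee : (e + e <= (e + e + k).+1)%N by lia.
  have eek : (e + e + k - e = e + k)%N by lia.
  case: hor => h.
    rewrite coprimep_sym in cop12.
    have [X [Y [sX sY eXY]]] := lemL h2 h cop12 sNZ hee.
    exists Y, X; split; [by rewrite -eek | by rewrite -eek | by rewrite eXY addrC].
  have [X [Y [sX sY eXY]]] := lemL h1 h cop12 sNZ hee.
  by exists X, Y; split; rewrite -?eek.
exists A, B, T1, T2; split => //; first by move: sT1; rewrite addKn.
  by move: sT2; rewrite addKn.
have : Q ^+ 2 = S * (T1 ^+ 2 + T2 ^+ 2) - Hh by rewrite /Hh; ring.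
rewrite eZ -mulNr eAB => ->; ring.
Qed.
End S3.

Section S4.
Variable R : realType.
Implicit Types (p q r : {mpoly R[2]}).

Lemma NC (p r : {mpoly R[2]}) g : (1 <= g)%N -> p \is g.-homog -> p * r = 1 -> False.
Proof.
move=> g1 hp e.
have p0 : p != 0 by apply/eqP => p0; move: e; rewrite p0 mul0r => /eqP; rewrite eq_sym oner_eq0.
have r0 : r != 0 by apply/eqP => r0; move: e; rewrite r0 mulr0 => /eqP; rewrite eq_sym oner_eq0.
have := msizeM p0 r0; rewrite e msize1.
have := msize_mdeg_lt (mlead_supp p0); rewrite (dhomog_mf hp (mlead_supp p0)).
have := msize_mdeg_lt (mlead_supp r0).
set x := mdeg _; set y := msize p; set z := msize r; lia.
Qed.

Lemma sum_sos d u1 u2 p :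
  (forall q : {mpoly R[2]}, q \is d.-homog -> exists a b,
     [/\ in_im_A d u1 u2 a, in_cone (in_sigma_ker d u1 u2) b & q ^+ 2 = a + b]) ->
  sos_form d p ->
  exists a b : {mpoly R[2]},
      [/\ in_im_A d u1 u2 a, in_cone (in_sigma_ker d u1 u2) b & p = a + b].
Proof.
move=> H [s [hs ->]]; elim: s hs => [|q s IH] hs.
  exists 0, 0; split; last by rewrite big_nil addr0.
    by exists 0, 0; split; rewrite ?dhomog0 // /A_u !mulr0 addr0.
  by exists [::]; split => //; rewrite big_nil.
have [a1 [b1 [[v1 [v2 [hv1 hv2 ea1]]] [t1 [ht1 eb1]] eq1]]] :=
  H q (hs q (mem_head _ _)).
have [a2 [b2 [[w1 [w2 [hw1 hw2 ea2]]] [t2 [ht2 eb2]] eq2]]] :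
  exists a b : {mpoly R[2]},
      [/\ in_im_A d u1 u2 a, in_cone (in_sigma_ker d u1 u2) b & \sum_(q <- s) q ^+ 2 = a + b].
  by apply: IH => x hx; apply: hs; rewrite in_cons hx orbT.
exists (a1 + a2), (b1 + b2); split.
- exists (v1 + w1), (v2 + w2); split; try exact: dhomogD.
  by rewrite ea1 ea2 /A_u; ring.
- exists (t1 ++ t2); split; last by rewrite big_cat eb1 eb2.
  by move=> x; rewrite mem_cat => /orP [] hx; [apply: ht1 | apply: ht2].
- by rewrite big_cons eq1 eq2; ring.
Qed.

Lemma zero_case d (q : {mpoly R[2]}) : q \is d.-homog -> exists a b,
     [/\ in_im_A d 0 0 a, in_cone (in_sigma_ker d 0 0) b & q ^+ 2 = a + b].
Proof.
move=> hq; exists 0, (q ^+ 2); split; last by rewrite add0r.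
  by exists 0, 0; split; rewrite ?dhomog0 // /A_u !mulr0 addr0.
exists [:: (1, q ^+ 2)]; split; last by rewrite big_seq1 scale1r.
move=> x; rewrite mem_seq1 => /eqP -> /=; split => //.
by exists q, 0; split => //; [exact: dhomog0 | rewrite /A_u; ring | ring].
Qed.


Lemma quot_homog (c v : {mpoly R[2]}) k d : c != 0 -> c \is k.-homog ->
  c * v \is d.-homog -> (k <= d)%N -> v \is (d - k).-homog.
Proof.
move=> c0 hc hd kd.
have [->|v0] := eqVneq v 0; first exact: dhomog0.
have cv0 : c * v != 0 by rewrite mulf_neq0.
have [e' he] : exists k, v \is k.-homog by apply: (@fac_homog R v c d); rewrite mulrC.
have := dhomogM hc he => hd'.
by have -> := dhomog_uniq cv0 hd hd'; rewrite addKn.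
Qed.

Lemma quot_le (c v : {mpoly R[2]}) k d : c \is k.-homog ->
  c * v \is d.-homog -> c * v != 0 -> (k <= d)%N.
Proof.
move=> hc hd cv0.
have v0 : v != 0 by apply: contra_neq cv0 => ->; rewrite mulr0.
have [e' he] : exists k, v \is k.-homog by apply: (@fac_homog R v c d); rewrite mulrC.
have := dhomogM hc he => hd'.
by have -> := dhomog_uniq cv0 hd hd'; rewrite leq_addr.
Qed.

Lemma hom_dvd (G P : {poly R}) n : G != 0 -> G %| P -> ((size G).-1 <= n)%N ->
  (size P <= n.+1)%N -> exists r, hom n P = hom (size G).-1 G * r.
Proof.
move=> G0 dv gn hP; exists (hom (n - (size G).-1) (P %/ G)).
have -> : hom n P = hom ((size G).-1 + (n - (size G).-1)) (G * (P %/ G)).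
  by rewrite subnKC // mulrC divpK.
apply: hom_mul.
  by rewrite prednK // size_poly_gt0.
rewrite size_divp //; move: hP gn; set x := size P; set y := (size G).-1; lia.
Qed.

Lemma no_common (c u1 u2 u1' u2' p : {mpoly R[2]}) g : c != 0 -> is_mgcd c u1 u2 ->
  u1 = c * u1' -> u2 = c * u2' -> (1 <= g)%N -> p \is g.-homog ->
  mdivides p u1' -> mdivides p u2' -> False.
Proof.
move=> c0 [_ _ hg] e1 e2 g1 hp [r1 er1] [r2 er2].
have [r er] : mdivides (p * c) c.
  by apply: hg; [exists r1; rewrite e1 er1 | exists r2; rewrite e2 er2]; rewrite mulrA [c * p]mulrC.
apply: (NC (r := r) g1 hp); apply: (mulfI c0); rewrite mulr1 [RHS]er; ring.
Qed.
End S4.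

Section S5.
Variable R : realType.

Lemma A_u_homog n (u1 u2 v1 v2 : {mpoly R[2]}) : u1 \is n.-homog -> u2 \is n.-homog ->
  v1 \is n.-homog -> v2 \is n.-homog -> A_u u1 u2 v1 v2 \is (n + n).-homog.
Proof. by move=> *; rewrite /A_u; apply: dhomogD; apply: dhomogM. Qed.

Lemma sq2_homog n (w1 w2 : {mpoly R[2]}) : w1 \is n.-homog -> w2 \is n.-homog ->
  w1 ^+ 2 + w2 ^+ 2 \is (n + n).-homog.
Proof. by move=> *; rewrite !expr2; apply: dhomogD; apply: dhomogM. Qed.

Lemma main_q (d : nat) (u1 u2 c u1' u2' : {mpoly R[2]}) :
  u1 \is d.-homog -> u2 \is d.-homog -> is_mgcd c u1 u2 -> u1 = c * u1' -> u2 = c * u2' ->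
  mcoprime c (u1' ^+ 2 + u2' ^+ 2) -> (u1 != 0) || (u2 != 0) ->
  forall q : {mpoly R[2]}, q \is d.-homog -> exists a b,
     [/\ in_im_A d u1 u2 a, in_cone (in_sigma_ker d u1 u2) b & q ^+ 2 = a + b].
Proof.
move=> hu1 hu2 hg e1 e2 hcop nz.
have c0 : c != 0.
  by apply/eqP => c0; move: nz; rewrite e1 e2 c0 !mul0r eqxx.
have [k hk] : exists k, c \is k.-homog.
  case/orP: nz => nz.
    by apply: (@fac_homog R c u1' d); rewrite -e1.
  by apply: (@fac_homog R c u2' d); rewrite -e2.
have kd : (k <= d)%N.
  case/orP: nz => nz; [apply: (@quot_le R c u1')|apply: (@quot_le R c u2')]; by rewrite -?e1 -?e2.
have hu1' : u1' \is (d - k).-homog by apply: (quot_homog c0 hk) => //; rewrite -e1.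
have hu2' : u2' \is (d - k).-homog by apply: (quot_homog c0 hk) => //; rewrite -e2.
have [e ed] : exists e, d = (e + k)%N by exists (d - k)%N; rewrite subnK.
move: hu1' hu2'; rewrite ed addnK => hu1' hu2'.
subst d.
have hC := size_phi hk.
have hU1 := size_phi hu1'.
have hU2 := size_phi hu2'.
have C0 : phi c != 0 by apply: contra_neq c0 => h; rewrite -(hom_phi hk) h hom0.
have U0 : (phi u1' != 0) || (phi u2' != 0).
  case/orP: nz => nz; apply/orP; [left|right]; apply: contra_neq nz => h.
    by rewrite e1 -(hom_phi hu1') h hom0 mulr0.
  by rewrite e2 -(hom_phi hu2') h hom0 mulr0.
have cop12 : coprimep (phi u1') (phi u2').
  apply/negPn/negP => ncop.
  have G0 : gcdp (phi u1') (phi u2') != 0 by rewrite gcdp_eq0 negb_and.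
  have d1 := dvdp_gcdl (phi u1') (phi u2'); have d2 := dvdp_gcdr (phi u1') (phi u2').
  move: ncop G0 d1 d2; rewrite /coprimep; move: (gcdp _ _) => G ncop G0 d1 d2.
  have sG : (0 < size G)%N by rewrite size_poly_gt0.
  have g1 : (1 <= (size G).-1)%N by move: ncop sG; case: (size G) => [|[|z]].
  have ge : ((size G).-1 <= e)%N.
    rewrite -ltnS (prednK sG).
    by case/orP: U0 => U0; [apply: leq_trans (dvdp_leq U0 d1) hU1 | apply: leq_trans (dvdp_leq U0 d2) hU2].
  have [r1 er1] := hom_dvd G0 d1 ge hU1.
  have [r2 er2] := hom_dvd G0 d2 ge hU2.
  apply: (no_common (p := hom (size G).-1 G) c0 hg e1 e2 g1 (hom_homog _ _)).
    by exists r1; rewrite -er1 hom_phi.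
  by exists r2; rewrite -er2 hom_phi.
have hinf : size (phi u1') = e.+1 \/ size (phi u2') = e.+1.
  case: (eqVneq (size (phi u1')) e.+1) => [h|n1]; first by left.
  case: (eqVneq (size (phi u2')) e.+1) => [h|n2]; first by right.
  exfalso.
  have s1 : (size (phi u1') <= e)%N by rewrite -ltnS ltn_neqAle n1 hU1.
  have s2 : (size (phi u2') <= e)%N by rewrite -ltnS ltn_neqAle n2 hU2.
  have e1' : (1 <= e)%N.
    case/orP: U0 => U0.
      by apply: leq_trans s1; rewrite size_poly_gt0.
    by apply: leq_trans s2; rewrite size_poly_gt0.
  have dec (U : {poly R}) : (size U <= e)%N -> hom e U = hom 1 1 * hom e.-1 U.
    move=> hs; rewrite -hom_mul ?size_poly1 ?prednK // mul1r add1n prednK //.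
  apply: (no_common (p := hom 1 1) c0 hg e1 e2 (leqnn 1) (hom_homog 1 (1 : {poly R}))).
    by exists (hom e.-1 (phi u1')); rewrite -dec // hom_phi.
  by exists (hom e.-1 (phi u2')); rewrite -dec // hom_phi.
have sS : size (phi u1' ^+ 2 + phi u2' ^+ 2) = (e + e).+1 by apply: sizeS.
have hs : u1' ^+ 2 + u2' ^+ 2 \is (e + e).-homog by apply: sq2_homog.
have phis : phi (u1' ^+ 2 + u2' ^+ 2) = phi u1' ^+ 2 + phi u2' ^+ 2.
  by rewrite rmorphD !rmorphXn.
have S0 : phi u1' ^+ 2 + phi u2' ^+ 2 != 0 by rewrite -size_poly_eq0 sS.
have copCS : coprimep (phi c) (phi u1' ^+ 2 + phi u2' ^+ 2).
  apply/negPn/negP => ncop.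
  have G0 : gcdp (phi c) (phi u1' ^+ 2 + phi u2' ^+ 2) != 0 by rewrite gcdp_eq0 negb_and C0.
  have d1 := dvdp_gcdl (phi c) (phi u1' ^+ 2 + phi u2' ^+ 2).
  have d2 := dvdp_gcdr (phi c) (phi u1' ^+ 2 + phi u2' ^+ 2).
  move: ncop G0 d1 d2; rewrite /coprimep; move: (gcdp _ _) => G ncop G0 d1 d2.
  have sG : (0 < size G)%N by rewrite size_poly_gt0.
  have gk : ((size G).-1 <= k)%N.
    by rewrite -ltnS (prednK sG); apply: leq_trans (dvdp_leq C0 d1) hC.
  have g2e : ((size G).-1 <= e + e)%N.
    by rewrite -ltnS (prednK sG) -sS; apply: dvdp_leq S0 d2.
  have [r1 er1] := hom_dvd G0 d1 gk hC.
  have [r2 er2] := hom_dvd G0 d2 g2e (eq_leq sS).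
  have [kap ek] : exists kap : R, hom (size G).-1 G = kap%:MP.
    apply: hcop; [exists r1; rewrite -er1 hom_phi // | exists r2; rewrite -er2 -phis hom_phi //].
  have := congr1 (@phi R) ek; rewrite phi_hom_size ?(prednK sG) // phiC => eG.
  by move: ncop G0; rewrite eG size_polyC polyC_eq0; case: (kap != 0).
move=> q hq.
have hQ := size_phi hq.
have [A [B [T1 [T2 [sA sB sT1 sT2 eQ]]]]] :=
  core (erefl _) C0 hC hU1 hU2 hQ cop12 hinf copCS.
have sTU (T U : {poly R}) : (size T <= k.+1)%N -> (size U <= e.+1)%N ->
    (size (T * U)%R <= (e + k).+1)%N.
  by move=> hT hU; apply: (sizeM_le hT hU); rewrite addnC.
have sTUN (T U : {poly R}) : (size T <= k.+1)%N -> (size U <= e.+1)%N ->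
    (size (- (T * U))%R <= (e + k).+1)%N.
  by move=> hT hU; rewrite size_polyN; apply: sTU.
have phiu1 : phi u1 = phi c * phi u1' by rewrite e1 rmorphM.
have phiu2 : phi u2 = phi c * phi u2' by rewrite e2 rmorphM.
have ker (T : {poly R}) : (size T <= k.+1)%N ->
    in_sigma_ker (e + k) u1 u2 (hom (e + k) (T * phi u2') ^+ 2 + hom (e + k) (- (T * phi u1')) ^+ 2).
  move=> hT; exists (hom (e + k) (T * phi u2')), (hom (e + k) (- (T * phi u1'))).
  split => //; try exact: hom_homog.
  apply: (@hom_inj _ ((e + k) + (e + k))).
  - by apply: A_u_homog => //; apply: hom_homog.
  - exact: dhomog0.
  rewrite /A_u rmorphD !rmorphM /= !phi_hom_size ?sTU ?sTUN // phiu1 phiu2 rmorph0.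
  ring.
exists (A_u u1 u2 (hom (e + k) A) (hom (e + k) B)),
  ((hom (e + k) (T1 * phi u2') ^+ 2 + hom (e + k) (- (T1 * phi u1')) ^+ 2) +
   (hom (e + k) (T2 * phi u2') ^+ 2 + hom (e + k) (- (T2 * phi u1')) ^+ 2)).
split.
- by exists (hom (e + k) A), (hom (e + k) B); split => //; apply: hom_homog.
- exists [:: (1, hom (e + k) (T1 * phi u2') ^+ 2 + hom (e + k) (- (T1 * phi u1')) ^+ 2);
            (1, hom (e + k) (T2 * phi u2') ^+ 2 + hom (e + k) (- (T2 * phi u1')) ^+ 2)].
  split; last by rewrite big_cons big_seq1 !scale1r.
  move=> x; rewrite !inE => /orP [] /eqP -> /=; split => //; exact: ker.
apply: (@hom_inj _ ((e + k) + (e + k))).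
- by rewrite expr2; apply: dhomogM.
- apply: dhomogD; first by apply: A_u_homog => //; apply: hom_homog.
  by apply: dhomogD; apply: sq2_homog; apply: hom_homog.
rewrite /A_u !rmorphD !rmorphM /= !phi_hom_size ?sTU ?sTUN // phiu1 phiu2 -!expr2 eQ.
ring.
Qed.
End S5.

Unset Implicit Arguments.
Theorem lemma4p3 (R : realType) (d : nat) (u1 u2 c u1' u2' : {mpoly R[2]}) :
  u1 \is d.-homog -> u2 \is d.-homog ->
  is_mgcd c u1 u2 -> u1 = c * u1' -> u2 = c * u2' ->
  mcoprime c (u1' ^+ 2 + u2' ^+ 2) ->
  forall p : {mpoly R[2]}, sos_form d p ->
    exists a b : {mpoly R[2]},
      [/\ in_im_A d u1 u2 a, in_cone (in_sigma_ker d u1 u2) b & p = a + b].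
Proof.
move=> hu1 hu2 hg e1 e2 hcop p hp.
apply: (sum_sos _ hp) => q hq.
have [nz|z] := boolP ((u1 != 0) || (u2 != 0)).
  exact: (main_q hu1 hu2 hg e1 e2 hcop nz).
move: z; rewrite negb_or !negbK => /andP [/eqP z1 /eqP z2].
by rewrite z1 z2; apply: zero_case.
Qed.
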